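(* In the M/M/1 setting below, if $\mathbb{E}[W(q^S_s\Lambda)]=W(q^S_s\lambda)$, then $q^S_m\le q^S_s\le q^S_e$.
   Context: Setting: an M/M/1 queue with true (deterministic) Poisson arrival rate $\lambda>0$ and exponential service times with rate $\mu$, so the expected time in system at effective arrival rate $x\in[0,\mu)$ is $W(x)=1/(\mu-x)$. Each served customer receives reward $R$ and incurs waiting cost $C>0$ per unit time, with $R\ge C/\mu$. Customers' beliefs about the arrival rate are described by a non-degenerate nonnegative random variable $\Lambda$ whose support has minimum $\lambda_{\min}$ and maximum $\lambda_{\max}$, with $0\le\lambda_{\min}<\lambda<\lambda_{\max}<\mu$. For $q\in[0,1]$: $\mathrm{Rev}^S(q)=q\lambda\,\mathbb{E}[R-C\,W(q\Lambda)]$ and $\mathrm{SW}^S(q)=q\lambda\,(R-C\,W(q\lambda))$, both strictly concave on $[0,1]$; $q^S_m$ is the maximizer of $\mathrm{Rev}^S$ over $[0,1]$ and $q^S_s$ is the maximizer of $\mathrm{SW}^S$ over $[0,1]$. The individual (no-fee) equilibrium $q^S_e$: if $R-C\,\mathbb{E}[W(\Lambda)]\ge0$ then $q^S_e=1$; otherwise $q^S_e$ is the unique $q\in[0,1]$ with $C\,\mathbb{E}[W(q\Lambda)]=R$. *)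

(* Defs.v *)
From HB Require Import structures.
From mathcomp Require Import all_boot all_order all_algebra.
From mathcomp Require Import all_classical all_reals all_analysis.
Set Implicit Arguments. Unset Strict Implicit. Unset Printing Implicit Defensive.
Import Order.TTheory GRing.Theory Num.Theory.
Local Open Scope classical_set_scope.
Local Open Scope ring_scope.

Section MM1.
Context {d : measure_display} {T : measurableType d} {R : realType}.

(* expected time in system at effective arrival rate x *)
Definition Wt (mu x : R) : R := (mu - x)^-1.

Definition EW (P : probability T R) (Lam : T -> R) (mu q : R) : R :=
  fine ('E_P[fun w => Wt mu (q * Lam w)])%E.

Definition RevS (P : probability T R) (Lam : T -> R) (lam mu Rw C q : R) : R :=
  q * lam * fine ('E_P[fun w => (Rw - C * Wt mu (q * Lam w))%R])%E.

End MM1.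

Definition SWS {R : realType} (lam mu Rw C q : R) : R :=
  q * lam * (Rw - C * Wt mu (q * lam)).

Definition is_max01 {R : realType} (f : R -> R) (x : R) : Prop :=
  0 <= x <= 1 /\ forall q, 0 <= q <= 1 -> f q <= f x.

(* individual (no-fee) equilibrium *)
Definition is_eq_S {d} {T : measurableType d} {R : realType}
  (P : probability T R) (Lam : T -> R) (mu Rw C qe : R) : Prop :=
  (0 <= Rw - C * EW P Lam mu 1 /\ qe = 1) \/
  (Rw - C * EW P Lam mu 1 < 0 /\ 0 <= qe <= 1 /\ C * EW P Lam mu qe = Rw).

(* the support of the law of Lam has minimum lmin and maximum lmax *)
Definition support_min_max {d} {T : measurableType d} {R : realType}
  (P : probability T R) (Lam : T -> R) (lmin lmax : R) : Prop :=
  P (Lam @^-1` `[lmin, lmax]) = 1%E /\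
  (forall e : R, 0 < e -> (0 < P (Lam @^-1` `[lmin, (lmin + e)%R[))%E) /\
  (forall e : R, 0 < e -> (0 < P (Lam @^-1` `](lmax - e)%R, lmax]))%E).

(* Main.v *)
Require Import Defs.
From HB Require Import structures.
From mathcomp Require Import all_boot all_order all_algebra.
From mathcomp Require Import all_classical all_reals all_analysis.
From mathcomp Require Import measurable_realfun.
From mathcomp Require Import ring lra.
Set Implicit Arguments. Unset Strict Implicit. Unset Printing Implicit Defensive.
Import Order.TTheory GRing.Theory Num.Theory.
Local Open Scope classical_set_scope.
Local Open Scope ring_scope.

Lemma measurable_inv (R : realType) : measurable_fun [set: R] (@GRing.inv R).
Proof.
have -> : [set: R] = ~` [set 0] `|` [set 0].
  apply/seteqP; split => x //= _; case: (eqVneq x 0) => h; [by right|left].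
  by apply/eqP.
apply/measurable_funU; last split.
- apply: measurableC. exact: (@measurable_set1 R 0).
- exact: (@measurable_set1 R 0).
2: exact: measurable_fun_set1.
apply: open_continuous_measurable_fun.
  have -> : ~` [set (0:R)] = [set x | x != 0].
    by apply/seteqP; split => x /=; [move=> h; apply/eqP | move=> /eqP].
  exact: open_neq.
by move=> x; rewrite inE /= => /eqP x0; apply: inv_continuous.
Qed.

Section Ex.
Context d (T : measurableType d) (R : realType) (P : probability T R).

Definition good (X : T -> R) :=
  measurable_fun setT X /\ exists M : R, forall w, `|X w| <= M.

Definition Ex (X : T -> R) : R := fine ('E_P[X])%E.

Lemma good_Lfun X : good X -> X \in Lfun P 1.
Proof.
move=> [mX [M hM]]; apply/Lfun1_integrable; apply/integrableP; split.
  exact/measurable_EFinP.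
apply: (@le_lt_trans _ _ ((Num.max M 0)%:E * P setT)%E).
  apply: integral_le_bound => //.
  - exact/measurable_EFinP.
  - by rewrite lee_fin le_max lexx orbT.
  - apply: aeW => w _ /=; rewrite lee_fin le_max hM //.
by rewrite probability_setT mule1 ltry.
Qed.

Lemma Ex_fin X : good X -> ('E_P[X] = (Ex X)%:E)%E.
Proof. by move=> g; rewrite /Ex fineK //; apply: expectation_fin_num; apply: good_Lfun. Qed.

Lemma ExD X Y : good X -> good Y -> Ex (X \+ Y) = Ex X + Ex Y.
Proof. by move=> gX gY; rewrite /Ex expectationD ?good_Lfun // (Ex_fin gX) (Ex_fin gY). Qed.

Lemma ExB X Y : good X -> good Y -> Ex (X \- Y) = Ex X - Ex Y.
Proof. by move=> gX gY; rewrite /Ex expectationB ?good_Lfun // (Ex_fin gX) (Ex_fin gY). Qed.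

Lemma ExZ X k : good X -> Ex (k \o* X) = k * Ex X.
Proof. by move=> gX; rewrite /Ex expectationZl ?good_Lfun // (Ex_fin gX). Qed.

Lemma Ex_cst c : Ex (cst c) = c.
Proof. by rewrite /Ex expectation_cst. Qed.

Lemma Ex_ge0 X : (forall w, 0 <= X w) -> 0 <= Ex X.
Proof. by move=> h; apply: fine_ge0; apply: expectation_ge0. Qed.

Lemma Ex_ext X Y : X =1 Y -> Ex X = Ex Y.
Proof. by move=> h; rewrite (funext h). Qed.

Lemma good_cst c : good (cst c).
Proof. split; [exact: measurable_cst | by exists `|c|]. Qed.

Lemma good_add X Y : good X -> good Y -> good (X \+ Y).
Proof.
move=> [mX [M hM]] [mY [N hN]]; split; first exact: measurable_funD.
by exists (M + N) => w; apply: (le_trans (ler_normD _ _)); apply: lerD.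
Qed.

Lemma good_sub X Y : good X -> good Y -> good (X \- Y).
Proof.
move=> [mX [M hM]] [mY [N hN]]; split; first exact: measurable_funB.
by exists (M + N) => w; apply: (le_trans (ler_normB _ _)); apply: lerD.
Qed.

Lemma good_mul X Y : good X -> good Y -> good (X \* Y).
Proof.
move=> [mX [M hM]] [mY [N hN]]; split; first exact: measurable_funM.
exists (M * N) => w /=; rewrite normrM; apply: ler_pM => //.
Qed.

Lemma good_scale X k : good X -> good (k \o* X).
Proof.
move=> [mX [M hM]]; split.
  by apply: measurable_funM => //; exact: measurable_cst.
exists (`|k| * M) => w /=; rewrite normrM mulrC; apply: ler_wpM2l => //.
Qed.

Lemma Ex_le X Y : good X -> good Y -> (forall w, X w <= Y w) -> Ex X <= Ex Y.
Proof.
move=> gX gY h; rewrite -subr_ge0 -ExB //; apply: Ex_ge0 => w /=.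
by rewrite subr_ge0.
Qed.

End Ex.


Section Model.
Context d (T : measurableType d) (R : realType) (P : probability T R).
Variable Lam : {RV P >-> R}.
Variables (mu lmin lmax : R).
Hypothesis Lam0 : forall w, 0 <= Lam w.
Hypothesis lmax0 : 0 < lmax.
Hypothesis lmaxmu : lmax < mu.
Hypothesis Psupp : P (Lam @^-1` `[lmin, lmax]) = 1%E.

Definition Lc (w : T) : R := Num.min (Lam w) lmax.

Lemma Lc_ge0 w : 0 <= Lc w.
Proof. by rewrite /Lc le_min Lam0 ltW. Qed.

Lemma Lc_le w : Lc w <= lmax.
Proof. by rewrite /Lc ge_min lexx orbT. Qed.

Lemma mLam : measurable_fun setT (Lam : T -> R).
Proof. exact: measurable_funPT. Qed.

Lemma good_Lc : good Lc.
Proof.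
split; first by apply: measurable_minr; [exact: mLam | exact: measurable_cst].
by exists lmax => w; rewrite ger0_norm ?Lc_ge0 ?Lc_le.
Qed.

Definition f (q : R) (w : T) : R := Wt mu (q * Lc w).

Lemma den_pos q w : 0 <= q <= 1 -> mu - lmax <= mu - q * Lc w.
Proof.
move=> /andP[q0 q1]; have := Lc_ge0 w; have := Lc_le w => h1 h2.
rewrite lerD2l lerN2; apply: (le_trans _ h1).
by rewrite -[X in _ <= X]mul1r; apply: ler_wpM2r.
Qed.

Lemma good_f q : 0 <= q <= 1 -> good (f q).
Proof.
move=> hq; split.
  have -> : f q = GRing.inv \o (fun w => mu - q * Lc w) by [].
  apply: measurableT_comp; first exact: measurable_inv.
  apply: measurable_funB; first exact: measurable_cst.
  apply: measurable_funM; first exact: measurable_cst.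
  by have [? _] := good_Lc.
exists (mu - lmax)^-1 => w; rewrite /f /Wt.
have h := den_pos w hq.
have hp : 0 < mu - lmax by rewrite subr_gt0.
rewrite ger0_norm; last by rewrite invr_ge0 (le_trans (ltW hp)).
by rewrite lef_pV2 // posrE (lt_le_trans hp).
Qed.


Lemma Ex_Lam_Lc (h : R -> R) : measurable_fun setT h ->
  Ex P (h \o Lam) = Ex P (h \o Lc).
Proof.
move=> mh; rewrite /Ex; congr fine; rewrite unlock.
apply: ae_eq_integral => //.
- by apply/measurable_EFinP; apply: measurableT_comp => //; exact: mLam.
- by apply/measurable_EFinP; apply: measurableT_comp => //; have [] := good_Lc.
have mA : measurable (Lam @^-1` `[lmin, lmax]).
  exact: measurable_funPTI (measurable_itv _).
exists (~` (Lam @^-1` `[lmin, lmax])); split.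
- exact: measurableC.
- by have := probability_setC P mA; rewrite Psupp subee // => h1; exact: h1.
- move=> w /= hw hin; apply: hw => _ /=.
  move: hin; rewrite /= in_itv /= => /andP[_ hle].
  by rewrite /Lc min_l.
Qed.


Hypothesis Pmax : forall e : R, 0 < e -> (0 < P (Lam @^-1` `](lmax - e)%R, lmax]))%E.

Lemma Ex_Lc_pos : 0 < Ex P Lc.
Proof.
pose A := Lam @^-1` `](lmax - lmax / 2)%R, lmax].
have mA : measurable A by exact: measurable_funPTI (measurable_itv _).
have gI : good (\1_A : T -> R).
  split; first exact: measurable_indic.
  by exists 1 => w; rewrite indicE; case: (w \in A); rewrite ?normr1 ?normr0.
have PA : 0 < Ex P (\1_A : T -> R).
  rewrite /Ex expectation_indic //; apply: fine_gt0.
  rewrite Pmax ?divr_gt0 //=.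
  by apply: (le_lt_trans (probability_le1 P mA)); rewrite ltry.
have h2 : 0 < lmax / 2 by rewrite divr_gt0.
have h3 : 0 < (lmax / 2) * Ex P (\1_A : T -> R) by exact: mulr_gt0.
apply: (lt_le_trans h3).
rewrite -ExZ //; apply: Ex_le => //; first exact: good_scale.
  exact: good_Lc.
move=> w /=; rewrite indicE; case: (boolP (w \in A)) => [|_].
  rewrite inE /A /= in_itv /= => /andP[h1 h4].
  by rewrite mul1r /Lc min_l //; apply: (le_trans _ (ltW h1)); lra.
by rewrite mul0r Lc_ge0.
Qed.


Lemma D_pos q w : 0 <= q <= 1 -> 0 < mu - q * Lc w.
Proof. by move=> hq; apply: (lt_le_trans _ (den_pos w hq)); rewrite subr_gt0. Qed.

Lemma D_le q w : 0 <= q <= 1 -> mu - q * Lc w <= mu.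
Proof.
move=> /andP[q0 _]; rewrite lerBlDr lerDl; apply: mulr_ge0 => //; exact: Lc_ge0.
Qed.

Lemma f_ge q w : 0 <= q <= 1 -> mu^-1 <= f q w.
Proof.
move=> hq; rewrite /f /Wt lef_pV2 ?posrE ?D_le ?D_pos //.
by apply: (lt_trans _ lmaxmu).
Qed.

Lemma f_pos q w : 0 <= q <= 1 -> 0 < f q w.
Proof. by move=> hq; rewrite /f /Wt invr_gt0 D_pos. Qed.

Lemma f_mono q q' : 0 <= q -> q <= q' -> q' <= 1 -> Ex P (f q) <= Ex P (f q').
Proof.
move=> q0 qq q1.
have hq : 0 <= q <= 1 by rewrite q0 (le_trans qq q1).
have hq' : 0 <= q' <= 1 by rewrite q1 (le_trans q0 qq).
apply: Ex_le; [exact: good_f | exact: good_f |] => w.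
rewrite /f /Wt lef_pV2 ?posrE ?D_pos //.
rewrite lerD2l lerN2; apply: ler_wpM2r => //; exact: Lc_ge0.
Qed.

Lemma f_ident a b w : 0 <= a <= 1 -> 0 <= b <= 1 ->
  b * f b w - a * f a w = mu * (b - a) * (f a w * f b w).
Proof.
move=> ha hb; rewrite /f /Wt.
have := D_pos w ha; have := D_pos w hb.
move=> hDb hDa.
have eDa : mu - a * Lc w != 0 by rewrite gt_eqF.
have eDb : mu - b * Lc w != 0 by rewrite gt_eqF.
by field; rewrite eDa eDb.
Qed.


Lemma f_prod_ge a b w : 0 <= a -> a <= b -> b <= 1 ->
  f a w * f a w + ((b - a) * mu^-1 ^+ 3) * Lc w <= f a w * f b w.
Proof.
move=> a0 ab b1.
have ha : 0 <= a <= 1 by rewrite a0 (le_trans ab b1).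
have hb : 0 <= b <= 1 by rewrite b1 (le_trans a0 ab).
have key : f b w - f a w = (b - a) * Lc w * (f a w * f b w).
  rewrite /f /Wt.
  have eDa : mu - a * Lc w != 0 by rewrite gt_eqF // D_pos.
  have eDb : mu - b * Lc w != 0 by rewrite gt_eqF // D_pos.
  by field; rewrite eDa eDb.
have fa := f_ge w ha; have fb := f_ge w hb.
have m0 : 0 < mu^-1 by rewrite invr_gt0; apply: (lt_trans lmax0).
set m := mu^-1 in fa fb m0 *.
set A := f a w in key fa *; set B := f b w in key fb *.
have x0 := Lc_ge0 w; set x := Lc w in key x0 *.
have hm3 : m ^+ 3 <= A * A * B.
  rewrite !exprS expr0 mulr1 mulrA; apply: ler_pM => //.
  - by apply: mulr_ge0; apply: ltW.
  - by apply: ltW.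
  - by apply: ler_pM => //; apply: ltW.
have E2 : A * B - A * A = (b - a) * x * (A * A * B).
  by rewrite -mulrBr key; ring.
have P0 : 0 <= (b - a) * x * (A * A * B - m ^+ 3).
  apply: mulr_ge0; last by rewrite subr_ge0.
  by apply: mulr_ge0 => //; rewrite subr_ge0.
nra.
Qed.

Lemma Ex_sq_ge a : 0 <= a <= 1 -> Ex P (f a) ^+ 2 <= Ex P (f a \* f a).
Proof.
move=> ha; set c := Ex P (f a).
have g := good_f ha.
have h : 0 <= Ex P (fun w => (f a w - c) ^+ 2) by apply: Ex_ge0 => w; exact: sqr_ge0.
have E : (fun w => (f a w - c) ^+ 2) =
  ((f a \* f a) \- ((2 * c) \o* f a)) \+ cst (c ^+ 2).
  by apply/funext => w /=; ring.
have g1 := good_mul g g.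
have g2 : good (2 * c \o* f a) by exact: good_scale.
have g3 := good_sub g1 g2.
have e1 : Ex P (f a \* f a \- (2 * c) \o* f a) =
  Ex P (f a \* f a) - Ex P ((2 * c) \o* f a) := ExB P g1 g2.
have e2 : Ex P ((2 * c) \o* f a) = 2 * c * Ex P (f a) := ExZ P _ g.
have e3 := Ex_cst P (c ^+ 2).
have e4 := ExD P g3 (good_cst _ (c ^+ 2)).
rewrite E e4 e1 e2 e3 -/c in h; nra.
Qed.


Lemma mh_W q : measurable_fun [set: R] (fun x => Wt mu (q * x)).
Proof.
have -> : (fun x => Wt mu (q * x)) = GRing.inv \o (fun x => mu - q * x) by [].
apply: measurableT_comp; first exact: measurable_inv.
apply: measurable_funB; first exact: measurable_cst.
apply: measurable_funM; first exact: measurable_cst.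
exact: measurable_id.
Qed.

Lemma EW_eq q : EW P Lam mu q = Ex P (f q).
Proof.
have := Ex_Lam_Lc (mh_W q); rewrite /EW /Ex /f /Lc => <- //.
Qed.

Lemma Rev_eq (lam Rw C q : R) : 0 <= q <= 1 ->
  RevS P Lam lam mu Rw C q = q * lam * (Rw - C * Ex P (f q)).
Proof.
move=> hq.
have mh : measurable_fun [set: R] (fun x => Rw - C * Wt mu (q * x)).
  apply: measurable_funB; first exact: measurable_cst.
  apply: measurable_funM; first exact: measurable_cst.
  exact: mh_W.
have e := Ex_Lam_Lc mh.
rewrite /RevS; congr (_ * _).
change (Ex P ((fun x => Rw - C * Wt mu (q * x)) \o Lam) = Rw - C * Ex P (f q)).
rewrite e.
have g := good_f hq.
have e1 : Ex P (cst Rw \- C \o* f q) = Ex P (cst Rw) - Ex P (C \o* f q)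
  := ExB P (good_cst _ Rw) (good_scale C g).
have e2 : Ex P (C \o* f q) = C * Ex P (f q) := ExZ P C g.
have e3 : Rw - Ex P (C \o* f q) = Ex P (cst Rw \- C \o* f q) by rewrite e1 Ex_cst.
rewrite -e2 e3; apply: Ex_ext => w /=; rewrite /f /=; ring.
Qed.


Lemma Exab_ge a b : 0 <= a -> a <= b -> b <= 1 ->
  Ex P (f a) ^+ 2 + (b - a) * mu^-1 ^+ 3 * Ex P Lc <= Ex P (f a \* f b).
Proof.
move=> a0 ab b1.
have ha : 0 <= a <= 1 by rewrite a0 (le_trans ab b1).
have hb : 0 <= b <= 1 by rewrite b1 (le_trans a0 ab).
have ga := good_f ha; have gb := good_f hb.
have gaa := good_mul ga ga; have gab := good_mul ga gb.
have gL : good ((b - a) * mu^-1 ^+ 3 \o* Lc) by apply: good_scale; exact: good_Lc.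
have e1 : Ex P ((f a \* f a) \+ ((b - a) * mu^-1 ^+ 3 \o* Lc)) =
  Ex P (f a \* f a) + Ex P ((b - a) * mu^-1 ^+ 3 \o* Lc) := ExD P gaa gL.
have e2 : Ex P ((b - a) * mu^-1 ^+ 3 \o* Lc) = (b - a) * mu^-1 ^+ 3 * Ex P Lc
  := ExZ P _ good_Lc.
have h1 : Ex P ((f a \* f a) \+ ((b - a) * mu^-1 ^+ 3 \o* Lc)) <= Ex P (f a \* f b).
  apply: Ex_le; [exact: good_add | exact: gab |] => w /=.
  by rewrite [Lc w * _]mulrC; apply: f_prod_ge.
have h2 := Ex_sq_ge ha.
rewrite e1 e2 in h1; lra.
Qed.

Lemma Rev_diff (lam Rw C a b : R) : 0 <= a -> a <= b -> b <= 1 ->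
  RevS P Lam lam mu Rw C b - RevS P Lam lam mu Rw C a =
  lam * (b - a) * (Rw - C * mu * Ex P (f a \* f b)).
Proof.
move=> a0 ab b1.
have ha : 0 <= a <= 1 by rewrite a0 (le_trans ab b1).
have hb : 0 <= b <= 1 by rewrite b1 (le_trans a0 ab).
have ga := good_f ha; have gb := good_f hb.
rewrite (Rev_eq lam Rw C ha) (Rev_eq lam Rw C hb).
have e1 : Ex P ((b \o* f b) \- (a \o* f a)) = Ex P (b \o* f b) - Ex P (a \o* f a)
  := ExB P (good_scale b gb) (good_scale a ga).
have e2 : Ex P (b \o* f b) = b * Ex P (f b) := ExZ P b gb.
have e3 : Ex P (a \o* f a) = a * Ex P (f a) := ExZ P a ga.
have e4 : Ex P ((b \o* f b) \- (a \o* f a)) = Ex P ((mu * (b - a)) \o* (f a \* f b)).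
  apply: Ex_ext => w /=; rewrite (mulrC (f b w)) (mulrC (f a w) a) (mulrC (f a w * f b w)).
  exact: f_ident.
have e5 : Ex P ((mu * (b - a)) \o* (f a \* f b)) = mu * (b - a) * Ex P (f a \* f b)
  := ExZ P _ (good_mul ga gb).
rewrite e4 e5 e2 e3 in e1.
have -> : b * lam * (Rw - C * Ex P (f b)) - a * lam * (Rw - C * Ex P (f a)) =
  lam * ((b - a) * Rw - C * (b * Ex P (f b) - a * Ex P (f a))) by ring.
rewrite -e1; ring.
Qed.

End Model.

Unset Implicit Arguments.

Theorem theorem1 (d : measure_display) (T : measurableType d) (R : realType)
  (P : probability T R) (Lam : {RV P >-> R})
  (lam mu Rw C lmin lmax qm qs qe : R) :
  0 < lam -> 0 < C -> C / mu <= Rw ->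
  0 <= lmin -> lmin < lam -> lam < lmax -> lmax < mu ->
  (forall w, 0 <= Lam w) ->
  ~ (exists c : R, P (Lam @^-1` [set c]) = 1%E) ->
  support_min_max P Lam lmin lmax ->
  is_max01 (RevS P Lam lam mu Rw C) qm ->
  is_max01 (SWS lam mu Rw C) qs ->
  is_eq_S P Lam mu Rw C qe ->
  EW P Lam mu qs = Wt mu (qs * lam) ->
  qm <= qs <= qe.
Proof.
move=> lam0 C0 hR lmin0 hl1 hl2 hl3 Lam0 _ [Psupp [_ Pmax]]
  [/andP[qm0 qm1] hRev] [/andP[qs0 qs1] hSW] hqe hEW.
have lmax0 : 0 < lmax by lra.
have mu0 : 0 < mu by lra.
have EWe := fun q => EW_eq mu Lam0 lmax0 Psupp q.
set y := fun q => Ex P (f Lam mu lmax q).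
have hu : 0 < mu - qs * lam by nra.
have y0e : y qs = (mu - qs * lam)^-1 by rewrite /y -EWe hEW.
apply/andP; split.
-
  rewrite leNgt; apply/negP => hlt.
  set a := qs in qs0 qs1 hu y0e hlt hSW.
  set b := qm in qm0 qm1 hlt hRev.
  have ab : 0 < b - a by rewrite subr_gt0.
  have hRa : RevS P Lam lam mu Rw C a <= RevS P Lam lam mu Rw C b.
    by apply: hRev; rewrite qs0 qs1.
  have hD := Rev_diff Lam0 lmax0 hl3 Psupp lam Rw C qs0 (ltW hlt) qm1.
  have hY := Exab_ge Lam0 lmax0 hl3 qs0 (ltW hlt) qm1.
  have EL := Ex_Lc_pos Lam0 lmax0 Pmax.
  rewrite -/(y a) y0e in hY.
  set Y := Ex P (f Lam mu lmax a \* f Lam mu lmax b) in hY hD.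
  set EL0 := Ex P (Lc Lam lmax) in hY EL.
  set u := mu - a * lam in hu y0e hY.
  have iu : u^-1 * u = 1 by rewrite mulVf // gt_eqF.
  have iu0 : 0 < u^-1 by rewrite invr_gt0.
  have m30 : 0 < mu^-1 ^+ 3 by rewrite exprn_gt0 // invr_gt0.
  set m3 := mu^-1 ^+ 3 in hY m30.
  set kap := m3 * EL0.
  have kap0 : 0 < kap by rewrite mulr_gt0.
  set m0 := mu - lam.
  have m00 : 0 < m0 by rewrite /m0; lra.
  set K := kap * m0 ^+ 3.
  have K0 : 0 < K by rewrite mulr_gt0 // exprn_gt0.
  set t := K / (K + lam).
  have t0 : 0 < t by rewrite divr_gt0 //; lra.
  have t1 : t < 1 by rewrite ltr_pdivrMr; lra.
  have tl : t * lam < K by rewrite mulrAC ltr_pdivrMr; nra.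
  set b' := a + (b - a) * t.
  have ab' : a < b' by rewrite /b' ltrDl mulr_gt0.
  have b'b : b' <= b by rewrite /b'; nra.
  have hS : SWS lam mu Rw C b' <= SWS lam mu Rw C a.
    by apply: hSW; apply/andP; split; lra.
  rewrite /SWS /Wt -/u in hS.
  set v := mu - b' * lam in hS.
  have hv : 0 < v by rewrite /v; nra.
  have uv0 : 0 < u * v by rewrite mulr_gt0.
  have E1 : u * v * (b' * lam * (Rw - C / v)) = lam * (b' * (Rw * u * v - C * u)).
    by field; rewrite gt_eqF.
  have E2 : u * v * (a * lam * (Rw - C / u)) = lam * (a * (Rw * u * v - C * v)).
    by field; rewrite gt_eqF.
  have hS' : lam * (b' * (Rw * u * v - C * u)) <= lam * (a * (Rw * u * v - C * v)).
    by rewrite -E1 -E2 ler_pM2l.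
  have hS'' : b' * (Rw * u * v - C * u) <= a * (Rw * u * v - C * v).
    by rewrite -(ler_pM2l lam0).
  have buav : b' * u - a * v = mu * (b' - a) by rewrite /u /v; ring.
  have key1 : Rw * u * v <= C * mu.
    have : (b' - a) * (Rw * u * v - C * mu) <= 0 by nra.
    rewrite pmulr_rle0 ?subr_gt0 //; lra.
  have uge : m0 <= u by rewrite /u /m0; nra.
  have vge : m0 <= v by rewrite /v /m0; nra.
  have uuv : m0 ^+ 3 <= u * u * v.
    rewrite !exprS expr0 mulr1 mulrA; apply: ler_pM => //; try lra.
    - by apply: mulr_ge0; lra.
    - by apply: ler_pM => //; lra.
  have hdiff : u - v = (b' - a) * lam by rewrite /u /v; ring.
  have hb'a : b' - a = (b - a) * t by rewrite /b'; ring.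
  have key2 : u - v < (b - a) * kap * (u * u * v).
    have h1 : t * lam < kap * (u * u * v) by apply: (lt_le_trans tl); rewrite /K ler_pM2l.
    rewrite hdiff hb'a; nra.
  have key3 : Rw < C * mu * (u^-1 ^+ 2 + (b - a) * kap).
    have uuv0 : 0 < u * u * v by rewrite !mulr_gt0.
    rewrite -(ltr_pM2r uuv0).
    have -> : C * mu * (u^-1 ^+ 2 + (b - a) * kap) * (u * u * v) =
      C * mu * (v + (b - a) * kap * (u * u * v)).
      by field; rewrite gt_eqF.
    have s1 : Rw * (u * u * v) <= C * mu * u.
      have -> : Rw * (u * u * v) = (Rw * u * v) * u by ring.
      by rewrite ler_pM2r.
    have s2 : C * mu * u < C * mu * (v + (b - a) * kap * (u * u * v)).
      by rewrite ltr_pM2l ?mulr_gt0 //; lra.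
    lra.
  have : RevS P Lam lam mu Rw C b - RevS P Lam lam mu Rw C a < 0.
    rewrite hD pmulr_rlt0; last by rewrite mulr_gt0.
    rewrite subr_lt0; apply: (lt_le_trans key3).
    rewrite ler_pM2l ?mulr_gt0 //.
    rewrite /kap mulrA; exact: hY.
  lra.
-
  have qe0 : 0 <= qe.
    by case: hqe => [[_ ->] | [_ [/andP[]]]].
  have [->|qspos] := eqVneq qs 0; first exact: qe0.
  have qsp : 0 < qs by rewrite lt_neqAle eq_sym qspos.
  have hS0 : SWS lam mu Rw C 0 <= SWS lam mu Rw C qs by apply: hSW; rewrite lexx ler01.
  rewrite /SWS !mul0r /Wt in hS0.
  set u := mu - qs * lam in hu y0e hS0.
  have iu : u^-1 * u = 1 by rewrite mulVf // gt_eqF.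
  have iu0 : 0 < u^-1 by rewrite invr_gt0.
  have hRy : 0 <= Rw - C * u^-1.
    by move: hS0; rewrite pmulr_rge0 // mulr_gt0.
  have hRys : 0 < Rw - C * u^-1.
    have [hE|hne] := eqVneq (Rw - C * u^-1) 0; last by rewrite lt_neqAle eq_sym hne hRy.
    exfalso.
    have hS2 : SWS lam mu Rw C (qs / 2) <= SWS lam mu Rw C qs.
      by apply: hSW; apply/andP; split; lra.
    rewrite /SWS /Wt -/u hE mulr0 in hS2.
    set v := mu - qs / 2 * lam in hS2.
    have uv : u < v by rewrite /u /v; nra.
    have vu : v^-1 < u^-1 by rewrite ltf_pV2 // posrE; lra.
    have : 0 < qs / 2 * lam * (Rw - C * v^-1).
      apply: mulr_gt0; first by apply: mulr_gt0 => //; lra.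
      have -> : Rw = C * u^-1 by apply/eqP; rewrite -subr_eq0 hE.
      rewrite subr_gt0; nra.
    lra.
  case: hqe => [[_ ->] // | [_ [/andP[qe0' qe1] hCe]]].
  rewrite leNgt; apply/negP => hlt.
  have hm := f_mono Lam0 lmax0 hl3 qe0 (ltW hlt) qs1.
  rewrite -/(y qe) -/(y qs) y0e in hm.
  rewrite EWe -/(y qe) in hCe.
  nra.
Qed.
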